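(* (1) Let $\Gamma<\mathrm{GL}(n,\mathbb{Q})$ be a subgroup such that for every finite index subgroup $\Gamma_0<\Gamma$, every non-zero $\Gamma_0$-invariant vector subspace $V\subset\mathbb{Q}^n$ equals $\mathbb{Q}^n$. Then the commensurator of $\Gamma\ltimes\mathbb{Q}^n$ (acting on $\mathbb{Q}^n$ by affine transformations $w\mapsto v+gw$) inside $\mathrm{Perm}(\mathbb{Q}^n)$ equals $\mathrm{Comm}_{\mathrm{GL}(n,\mathbb{Q})}(\Gamma)\ltimes\mathbb{Q}^n$. (2) Let $\Lambda$ be a group that cannot be written as a non-trivial direct product and has no non-trivial finite index subgroups, and let $\Lambda_0<\Lambda$ be a proper subgroup with the relative ICC property. Then the commensurator, inside $\mathrm{Perm}(\Lambda)$, of $\Lambda_0\times\Lambda$ acting on $\Lambda$ by left-right multiplication consists exactly of the permutations $g\mapsto\alpha(g)g_0$ with $\alpha\in\mathrm{Comm}_{\mathrm{Aut}(\Lambda)}(\mathrm{Ad}\,\Lambda_0)$ and $g_0\in\Lambda$.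
   Context: For a subgroup $H$ of a group $G$, $\mathrm{Comm}_G(H)=\{g\in G: gHg^{-1}\cap H$ has finite index in $gHg^{-1}$ and $H\}$. $\mathrm{Perm}(S)$ is the group of all permutations of a set $S$. A subgroup $\Lambda_0<\Lambda$ has the relative ICC property if $\{ghg^{-1}:g\in\Lambda_0\}$ is infinite for every $h\in\Lambda\setminus\{e\}$. $\mathrm{Ad}\,\Lambda_0$ is the group of inner automorphisms $\mathrm{Ad}\,h$, $h\in\Lambda_0$, inside $\mathrm{Aut}(\Lambda)$. The left-right action is $(h,k)\cdot g=hgk^{-1}$. *)

(* Defs.v *)
From HB Require Import structures.
From mathcomp Require Import all_boot all_order all_algebra.
From Stdlib Require List.
Set Implicit Arguments. Unset Strict Implicit. Unset Printing Implicit Defensive.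
Import GRing.Theory.
Local Open Scope ring_scope.

Section Generic.
Variables (T : Type) (mul : T -> T -> T) (one : T).

Definition is_subgroup (G H : T -> Prop) : Prop :=
  (forall h, H h -> G h) /\ H one /\
  (forall a b, H a -> H b -> H (mul a b)) /\
  (forall a, H a -> exists b, H b /\ mul a b = one /\ mul b a = one).

Definition fin_index (K H : T -> Prop) : Prop :=
  exists s : list T, (forall a, List.In a s -> H a) /\
    forall h, H h -> exists a k, List.In a s /\ K k /\ h = mul a k.

(* g H g^{-1}, written without inverses: x = g h g^{-1}  <->  x g = g h *)
Definition conjS (g : T) (H : T -> Prop) : T -> Prop :=
  fun x => exists h, H h /\ mul x g = mul g h.

Definition capS (A B : T -> Prop) : T -> Prop := fun x => A x /\ B x.

Definition Comm (G H : T -> Prop) : T -> Prop :=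
  fun g => G g /\ fin_index (capS (conjS g H) H) (conjS g H)
               /\ fin_index (capS (conjS g H) H) H.
End Generic.

Definition compf (S : Type) (f g : S -> S) : S -> S := fun x => f (g x).
Definition PermS (S : Type) : (S -> S) -> Prop := fun f => bijective f.

Definition matmul (n : nat) (A B : 'M[rat]_n) : 'M[rat]_n := A *m B.
Definition GLn (n : nat) : 'M[rat]_n -> Prop := fun A => A \in unitmx.

Definition is_subspace (n : nat) (V : 'cV[rat]_n -> Prop) : Prop :=
  V 0 /\ (forall u v, V u -> V v -> V (u + v)) /\
  (forall (c : rat) v, V v -> V (c *: v)).

Definition Aff (n : nat) (Gamma : 'M[rat]_n -> Prop) : ('cV[rat]_n -> 'cV[rat]_n) -> Prop :=
  fun f => exists g v, Gamma g /\ f = (fun w => v + g *m w).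

Definition is_group (L : Type) (mul : L -> L -> L) (one : L) (inv : L -> L) : Prop :=
  (forall x y z, mul x (mul y z) = mul (mul x y) z) /\
  (forall x, mul one x = x) /\ (forall x, mul (inv x) x = one).

Definition normalS (L : Type) (mul : L -> L -> L) (inv : L -> L) (H : L -> Prop) : Prop :=
  forall g h, H h -> H (mul (mul g h) (inv g)).

Definition no_direct_product (L : Type) (mul : L -> L -> L) (one : L) (inv : L -> L) : Prop :=
  forall A B : L -> Prop,
    is_subgroup mul one (fun _ => True) A -> is_subgroup mul one (fun _ => True) B ->
    normalS mul inv A -> normalS mul inv B ->
    (forall x, A x -> B x -> x = one) ->
    (forall g, exists a b, A a /\ B b /\ g = mul a b) ->
    (forall a, A a -> a = one) \/ (forall b, B b -> b = one).

Definition no_fin_index_sub (L : Type) (mul : L -> L -> L) (one : L) : Prop :=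
  forall H : L -> Prop, is_subgroup mul one (fun _ => True) H ->
    fin_index mul H (fun _ => True) -> forall g, H g.

Definition relative_ICC (L : Type) (mul : L -> L -> L) (one : L) (inv : L -> L)
  (L0 : L -> Prop) : Prop :=
  forall h, h <> one ->
    ~ exists s : list L, forall g, L0 g -> List.In (mul (mul g h) (inv g)) s.

Definition LRaction (L : Type) (mul : L -> L -> L) (inv : L -> L) (L0 : L -> Prop)
  : (L -> L) -> Prop :=
  fun f => exists h k, L0 h /\ f = (fun g => mul (mul h g) (inv k)).

Definition AutL (L : Type) (mul : L -> L -> L) : (L -> L) -> Prop :=
  fun f => bijective f /\ forall x y, f (mul x y) = mul (f x) (f y).

Definition AdS (L : Type) (mul : L -> L -> L) (inv : L -> L) (L0 : L -> Prop)
  : (L -> L) -> Prop :=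
  fun phi => exists h, L0 h /\ phi = (fun x => mul (mul h x) (inv h)).

(* Main.v *)
Require Import Defs.
From HB Require Import structures.
From mathcomp Require Import all_boot all_order all_algebra.
From Stdlib Require Import FunctionalExtensionality Classical ClassicalEpsilon.
From Stdlib Require List.
Set Implicit Arguments. Unset Strict Implicit.
Import GRing.Theory Num.Theory.
Local Open Scope ring_scope.

Section Grp.
Variables (L : Type) (mul : L -> L -> L) (one : L) (inv : L -> L).
Hypothesis HG : is_group mul one inv.
Local Infix "*" := mul.

Lemma gA x y z : x * (y * z) = (x * y) * z. Proof. by case: HG. Qed.
Lemma g1l x : one * x = x. Proof. by case: HG => _ []. Qed.
Lemma gVl x : inv x * x = one. Proof. by case: HG => _ []. Qed.
Lemma gVr x : x * inv x = one.
Proof.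
  rewrite -[x * inv x]g1l -[X in X * _](gVl (inv x)).
  by rewrite -gA (gA (inv x) x) gVl g1l gVl.
Qed.
Lemma g1r x : x * one = x. Proof. by rewrite -(gVl x) gA gVr g1l. Qed.
Lemma gcanl x y z : x * y = x * z -> y = z.
Proof. move=> H. by rewrite -(g1l y) -(gVl x) -gA H gA gVl g1l. Qed.
Lemma gcanr x y z : y * x = z * x -> y = z.
Proof. move=> H. by rewrite -(g1r y) -(gVr x) gA H -gA gVr g1r. Qed.
Lemma ginv_uniq x y : x * y = one -> y = inv x.
Proof. move=> H; apply: (gcanl (x:=x)). by rewrite H gVr. Qed.
Lemma gVK x : inv (inv x) = x.
Proof. symmetry; apply: ginv_uniq. exact: gVl. Qed.
Lemma gVM x y : inv (x * y) = inv y * inv x.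
Proof. symmetry; apply: ginv_uniq. by rewrite -gA (gA y) gVr g1l gVr. Qed.
Lemma gV1 : inv one = one. Proof. symmetry; apply: ginv_uniq; exact: g1l. Qed.

Lemma sub_one G H : is_subgroup mul one G H -> H one. Proof. by case=> _ []. Qed.
Lemma sub_mul G H a b : is_subgroup mul one G H -> H a -> H b -> H (a * b).
Proof. by case=> _ [] _ [] M _; apply: M. Qed.
Lemma sub_inv G H a : is_subgroup mul one G H -> H a -> H (inv a).
Proof. case=> _ [] _ [] _ I Ha. case: (I a Ha) => b [Hb [E _]]. by rewrite -(ginv_uniq E). Qed.
Lemma sub_sub G H a : is_subgroup mul one G H -> H a -> G a.
Proof. by case=> S _; apply: S. Qed.
Lemma mk_sub G (H : L -> Prop) : (forall a, H a -> G a) -> H one ->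
  (forall a b, H a -> H b -> H (a * b)) -> (forall a, H a -> H (inv a)) ->
  is_subgroup mul one G H.
Proof.
  move=> S O M I; split=> //; split=> //; split=> // a Ha.
  exists (inv a); split; [exact: I | split; [exact: gVr | exact: gVl]].
Qed.
End Grp.

Section Fun.
Variable X : Type.
Definition fgrp (S : (X -> X) -> Prop) :=
  S id /\ (forall x y, S x -> S y -> S (compf x y)) /\
  (forall x, S x -> exists y, S y /\ compf x y = id /\ compf y x = id).

Lemma compfA (x y z : X -> X) : compf x (compf y z) = compf (compf x y) z.
Proof. by []. Qed.
Lemma compf1 (x : X -> X) : compf x id = x. Proof. by []. Qed.
Lemma comp1f (x : X -> X) : compf id x = x. Proof. by []. Qed.

Lemma finv_uniq (x y y' : X -> X) : compf y x = id -> compf x y' = id -> y = y'.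
Proof. move=> H1 H2. by rewrite -(compf1 y) -H2 compfA H1. Qed.

Lemma fgrp_id S : fgrp S -> S id. Proof. by case. Qed.
Lemma fgrp_comp S x y : fgrp S -> S x -> S y -> S (compf x y).
Proof. by case=> _ [] C _; apply: C. Qed.
Lemma fgrp_inv S x y : fgrp S -> S x -> compf y x = id -> compf x y = id -> S y.
Proof.
  case=> _ [] _ I Sx E1 E2. case: (I x Sx) => z [Sz [E3 E4]].
  by have -> : y = z by apply: finv_uniq E1 E3.
Qed.

Lemma conj_fgrp (H : (X -> X) -> Prop) f : fgrp H -> bijective f ->
  fgrp (conjS (@compf X) f H).
Proof.
  move=> [H1 [HC HI]] [g fK gK].
  split; [|split].
  - exists id; split=> //.
  - move=> x y [h [Hh Ex]] [h' [Hh' Ey]]. exists (compf h h'); split; first exact: HC.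
    by rewrite -compfA Ey compfA Ex.
  - move=> x [h [Hh Ex]]. case: (HI h Hh) => h' [Hh' [E1 E2]].
    have xE : x = compf f (compf h g).
      apply: functional_extensionality => z.
      have := f_equal (fun F => F (g z)) Ex. rewrite /compf gK => ->. by [].
    exists (compf f (compf h' g)); split; [|split].
    + exists h'; split=> //. apply: functional_extensionality => z. by rewrite /compf fK.
    + rewrite xE; apply: functional_extensionality => z.
      have := f_equal (fun F => F (g z)) E1. rewrite /compf fK => ->. by rewrite gK.
    + rewrite xE; apply: functional_extensionality => z.
      have := f_equal (fun F => F (g z)) E2. rewrite /compf fK => ->. by rewrite gK.
Qed.

Lemma cap_fgrp A B : fgrp A -> fgrp B -> fgrp (capS A B).
Proof.
  move=> GA GB; split; [|split].
  - split; exact: fgrp_id.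
  - move=> x y [? ?] [? ?]; split; exact: fgrp_comp.
  - move=> x [Ax Bx]. case: GA => _ [] _ I. case: (I x Ax) => y [Ay [E1 E2]].
    exists y; split=> //; split=> //; exact: fgrp_inv E2 E1.
Qed.
End Fun.

Lemma list_pick (A B : Type) (Q : B -> Prop) (R : A -> B -> Prop) (s : list A) :
  exists s' : list B, (forall c, List.In c s' -> Q c) /\
    forall a, List.In a s -> forall c, Q c -> R a c -> exists c', List.In c' s' /\ R a c'.
Proof.
  elim: s => [|a s [s' [H1 H2]]].
  - by exists nil; split=> //.
  - case: (classic (exists c, Q c /\ R a c)) => [[c [Qc Rc]]|N].
    + exists (c :: s'); split.
      * by move=> c' [<-|/H1].
      * move=> a' [<-|Ia] c0 Q0 R0; first by exists c; split=> //; left.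
        case: (H2 a' Ia c0 Q0 R0) => c' [I R']. by exists c'; split=> //; right.
    + exists s'; split=> // a' [<-|Ia] c0 Q0 R0; first by exfalso; apply: N; exists c0.
      exact: H2 Ia c0 Q0 R0.
Qed.

Section GrpMore.
Variables (L : Type) (mul : L -> L -> L) (one : L) (inv : L -> L).
Hypothesis HG : is_group mul one inv.
Local Infix "*" := mul.
Lemma gmulVK x y : x * inv y * y = x. Proof. by rewrite -(gA HG) (gVl HG) (g1r HG). Qed.
Lemma gmulKV x y : x * y * inv y = x. Proof. by rewrite -(gA HG) (gVr HG) (g1r HG). Qed.
End GrpMore.

Ltac gnorm HG := repeat progress (rewrite ?(gVM HG) ?(gVK HG) ?(gV1 HG) ?(gA HG) ?(g1l HG) ?(g1r HG) ?(gVr HG) ?(gVl HG) ?(gmulVK HG) ?(gmulKV HG)).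

Lemma fi_mono T (m : T -> T -> T) (K K' H : T -> Prop) :
  (forall x, K x -> K' x) -> fin_index m K H -> fin_index m K' H.
Proof.
  move=> S [s [H1 H2]]; exists s; split=> // h Hh.
  case: (H2 h Hh) => a [k [I [Kk E]]]. exists a, k; split=> //; split=> //; exact: S.
Qed.
Lemma fi_ext T (m : T -> T -> T) (K K' H H' : T -> Prop) :
  (forall x, K x -> K' x) -> (forall x, H x <-> H' x) -> fin_index m K H -> fin_index m K' H'.
Proof.
  move=> S E [s [H1 H2]]; exists s; split; first by move=> a /H1 /E.
  move=> h /E Hh. case: (H2 h Hh) => a [k [I [Kk E']]]. exists a, k; split=> //; split=> //; exact: S.
Qed.
Lemma fi_iff T (m : T -> T -> T) (K K' H H' : T -> Prop) :
  (forall x, K x <-> K' x) -> (forall x, H x <-> H' x) -> (fin_index m K H <-> fin_index m K' H').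
Proof.
  move=> E1 E2; split; apply: fi_ext => x; try (by move/E1); try (by move/E2); by rewrite E2.
Qed.

Section Hom.
Variables (L : Type) (mul : L -> L -> L) (one : L) (inv : L -> L).
Hypothesis HG : is_group mul one inv.
Local Infix "*" := mul.
Variable X : Type.
Variables (phi : L -> X -> X).
Hypothesis phiM : forall a b, phi (a * b) = compf (phi a) (phi b).
Hypothesis phi1 : phi one = id.

Lemma phiV a : compf (phi (inv a)) (phi a) = id /\ compf (phi a) (phi (inv a)) = id.
Proof. by rewrite -!phiM (gVl HG) (gVr HG) phi1. Qed.

Lemma hom_sub (K : (X -> X) -> Prop) D : fgrp K -> is_subgroup mul one (fun _ => True) D ->
  is_subgroup mul one D (fun d => D d /\ K (phi d)).
Proof.
  move=> FK SD. apply: (mk_sub HG) => //.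
  - by move=> a [].
  - split; [exact: sub_one SD | rewrite phi1; exact: fgrp_id].
  - move=> a b [Da Ka] [Db Kb]; split; [exact: (sub_mul SD Da Db) | rewrite phiM; exact: fgrp_comp].
  - move=> a [Da Ka]; split; first exact: (sub_inv HG SD Da).
    case: (phiV a) => E1 E2. exact: fgrp_inv FK Ka E1 E2.
Qed.

Lemma hom_fi (G K : (X -> X) -> Prop) (D : L -> Prop) :
  fgrp G -> fgrp K -> (forall x, K x -> G x) -> fin_index (@compf X) K G ->
  is_subgroup mul one (fun _ => True) D -> (forall d, D d -> G (phi d)) ->
  fin_index mul (fun d => D d /\ K (phi d)) D.
Proof.
  move=> FG FK KG [s [sG cov]] SD DG.
  case: (list_pick D (fun a r => exists k, K k /\ phi r = compf a k) s) => s' [s'D s'P].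
  exists s'; split=> // d Dd.
  case: (cov _ (DG d Dd)) => a [k [Ia [Kk E]]].
  case: (s'P a Ia d Dd); first by exists k.
  move=> r [Ir [k' [Kk' Er]]].
  exists r, (inv r * d); split=> //; split; last by rewrite (gA HG) (gVr HG) (g1l HG).
  split; first by apply: (sub_mul SD) Dd; apply: (sub_inv HG SD); apply: s'D.
  case: FG => _ [] _ IG. case: (IG a (sG a Ia)) => a' [_ [Ea1 Ea2]].
  case: FK => K1 [] KC IK. case: (IK k' Kk') => k2 [Kk2 [Ek1 Ek2]].
  have Einv : phi (inv r) = compf k2 a'.
    apply: (finv_uniq (x := phi r)); first by case: (phiV r).
    rewrite Er -compfA (compfA k' k2) Ek1 comp1f. exact: Ea1.
  rewrite phiM Einv E -compfA (compfA a' a) Ea2 comp1f. exact: KC.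
Qed.

Lemma all_K (G K : (X -> X) -> Prop) :
  no_fin_index_sub mul one ->
  fgrp G -> fgrp K -> (forall x, K x -> G x) -> fin_index (@compf X) K G ->
  (forall d, G (phi d)) -> forall x, K (phi x).
Proof.
  move=> NF FG FK KG FI PG x.
  have ST : is_subgroup mul one (fun _ => True) (fun _ : L => True) by apply: (mk_sub HG).
  have FI' := hom_fi FG FK KG FI ST (fun d _ => PG d).
  have SH := hom_sub FK ST.
  by case: (NF _ SH FI' x).
Qed.
End Hom.

Section P2.
Variables (L : Type) (mul : L -> L -> L) (one : L) (inv : L -> L) (L0 : L -> Prop).
Hypothesis HG : is_group mul one inv.
Hypothesis Hsub : is_subgroup mul one (fun _ => True) L0.
Hypothesis Hicc : relative_ICC mul one inv L0.
Local Infix "*" := mul.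

Definition lr a b : L -> L := fun g => a * g * b.

Lemma lr_comp a b a' b' : compf (lr a b) (lr a' b') = lr (a * a') (b' * b).
Proof. apply: functional_extensionality => z; rewrite /compf /lr. by gnorm HG. Qed.
Lemma lr11 : lr one one = id.
Proof. apply: functional_extensionality => z; rewrite /lr. by gnorm HG. Qed.

Lemma center z : (forall g, z * g = g * z) -> z = one.
Proof.
  move=> C. case: (classic (z = one)) => // nz; exfalso.
  apply: (Hicc nz); exists (z :: nil) => g _; left.
  by rewrite -C (gmulKV HG).
Qed.

Lemma lr_inj a b a' b' : lr a b = lr a' b' -> a = a' /\ b = b'.
Proof.
  move=> E. have E1 : forall g, a * g * b = a' * g * b' by move=> g; exact: (f_equal (fun F => F g) E).
  have Eb : b' = inv a' * a * b.
    have H := E1 one; rewrite !(g1r HG) in H. by rewrite -(gA HG) H; gnorm HG.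
  have Z : inv a' * a = one.
    apply: center => g. apply: (gcanr HG (x := b)).
    have := E1 g. rewrite Eb => H.
    rewrite -(gA HG) -[X in _ = X](gA HG) -(gA HG).
    apply: (gcanl HG (x := a')). rewrite !(gA HG) (gVr HG) (g1l HG). rewrite !(gA HG) in H.
    by rewrite H.
  have Ea : a = a' by rewrite -[a](g1l HG) -(gVr HG a') -(gA HG) Z (g1r HG).
  split=> //. by rewrite Eb -Ea (gVl HG) (g1l HG).
Qed.

Lemma LR_iff x : LRaction mul inv L0 x <-> exists a b, L0 a /\ x = lr a b.
Proof.
  split.
  - case=> h [k [Hh ->]]. by exists h, (inv k).
  - case=> a [b [Ha ->]]. exists a, (inv b); split=> //. by rewrite (gVK HG).
Qed.

Lemma LR_fgrp : fgrp (LRaction mul inv L0).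
Proof.
  split; [|split].
  - apply/LR_iff. exists one, one. split. exact: (sub_one Hsub). by rewrite lr11.
  - move=> x y /LR_iff [a [b [Ha ->]]] /LR_iff [a' [b' [Ha' ->]]].
    apply/LR_iff; exists (a * a'), (b' * b); split; [exact: (sub_mul Hsub) | exact: lr_comp].
  - move=> x /LR_iff [a [b [Ha ->]]]. exists (lr (inv a) (inv b)); split.
    + apply/LR_iff; exists (inv a), (inv b); split=> //; exact: (sub_inv HG Hsub).
    + by split; rewrite lr_comp; gnorm HG; rewrite lr11.
Qed.

Lemma Ad_iff x : AdS mul inv L0 x <-> exists c, L0 c /\ x = lr c (inv c).
Proof. by []. Qed.

Lemma FIa (Xp Yp : L -> Prop) :
  fin_index (@compf L) (fun x => exists c b, Yp c /\ x = lr c b) (fun x => exists c b, Xp c /\ x = lr c b)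
  <-> fin_index mul Yp Xp.
Proof.
  split.
  - case=> s [sX cov].
    case: (list_pick Xp (fun a c => exists b, a = lr c b) s) => s' [s'X s'P].
    exists s'; split=> // x Xx.
    case: (cov (lr x one)); first by exists x, one.
    move=> a [k [Ia [[y [b [Yy ->]]] E]]].
    case: (sX a Ia) => c [b' [Xc Ea]].
    case: (s'P a Ia c Xc); first by exists b'.
    move=> c' [Ic' [b'' Ea']].
    exists c', y; split=> //; split=> //.
    rewrite Ea' lr_comp in E. by case: (lr_inj E).
  - case=> s [sX cov]. exists (List.map (fun c => lr c one) s); split.
    + move=> a /List.in_map_iff [c [<- Ic]]. exists c, one; split=> //; exact: sX.
    + move=> h [x [b [Xx ->]]]. case: (cov x Xx) => c [y [Ic [Yy ->]]].
      exists (lr c one), (lr y b); split; first by apply/List.in_map_iff; exists c.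
      split; first by exists y, b.
      by rewrite lr_comp (g1r HG).
Qed.

Lemma FIb (Xp Yp : L -> Prop) :
  fin_index (@compf L) (fun x => exists c, Yp c /\ x = lr c (inv c)) (fun x => exists c, Xp c /\ x = lr c (inv c))
  <-> fin_index mul Yp Xp.
Proof.
  split.
  - case=> s [sX cov].
    case: (list_pick Xp (fun a c => a = lr c (inv c)) s) => s' [s'X s'P].
    exists s'; split=> // x Xx.
    case: (cov (lr x (inv x))); first by exists x.
    move=> a [k [Ia [[y [Yy ->]] E]]].
    case: (sX a Ia) => c [Xc Ea].
    case: (s'P a Ia c Xc Ea) => c' [Ic' Ea'].
    exists c', y; split=> //; split=> //.
    rewrite Ea' lr_comp -(gVM HG) in E. by case: (lr_inj E).
  - case=> s [sX cov]. exists (List.map (fun c => lr c (inv c)) s); split.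
    + move=> a /List.in_map_iff [c [<- Ic]]. exists c; split=> //; exact: sX.
    + move=> h [x [Xx ->]]. case: (cov x Xx) => c [y [Ic [Yy ->]]].
      exists (lr c (inv c)), (lr y (inv y)); split; first by apply/List.in_map_iff; exists c.
      split; first by exists y.
      by rewrite lr_comp (gVM HG).
Qed.


Section Char.
Variable alpha : L -> L.
Hypothesis Halpha : AutL mul alpha.
Variable g0 : L.

Lemma aM x y : alpha (x * y) = alpha x * alpha y. Proof. by case: Halpha. Qed.
Lemma a1 : alpha one = one.
Proof. apply: (gcanl HG (x := alpha one)). by rewrite -aM !(g1r HG). Qed.
Lemma aV x : alpha (inv x) = inv (alpha x).
Proof. apply: (ginv_uniq HG). by rewrite -aM (gVr HG) a1. Qed.

Definition E0 c := exists a, L0 a /\ c = alpha a.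

Lemma W_char x : conjS (@compf L) (fun g => alpha g * g0) (LRaction mul inv L0) x <->
  exists c b, E0 c /\ x = lr c b.
Proof.
  case: Halpha => [[ai aK iK] _].
  split.
  - case=> h [/LR_iff [a [b [Ha ->]]] E].
    exists (alpha a), (inv g0 * alpha b * g0); split; first by exists a.
    apply: functional_extensionality => y.
    have -> : y = alpha (ai (y * inv g0)) * g0 by rewrite iK (gmulVK HG).
    have := f_equal (fun F => F (ai (y * inv g0))) E. rewrite /compf => ->.
    rewrite /lr !aM. by gnorm HG.
  - case=> c [b [[a [Ha ->]] ->]].
    exists (lr a (ai (g0 * b * inv g0))); split; first by apply/LR_iff; exists a, (ai (g0 * b * inv g0)).
    apply: functional_extensionality => z. rewrite /compf /lr !aM iK. by gnorm HG.
Qed.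

Lemma V_char x : conjS (@compf L) alpha (AdS mul inv L0) x <->
  exists c, E0 c /\ x = lr c (inv c).
Proof.
  case: Halpha => [[ai aK iK] _].
  split.
  - case=> h [[a [Ha ->]] E].
    exists (alpha a); split; first by exists a.
    apply: functional_extensionality => y.
    have -> : y = alpha (ai y) by rewrite iK.
    have := f_equal (fun F => F (ai y)) E. rewrite /compf => ->.
    by rewrite /lr !aM aV.
  - case=> c [[a [Ha ->]] ->].
    exists (lr a (inv a)); split; first by exists a.
    apply: functional_extensionality => z. by rewrite /compf /lr !aM aV.
Qed.

Lemma capW x : capS (conjS (@compf L) (fun g => alpha g * g0) (LRaction mul inv L0)) (LRaction mul inv L0) x <->
  exists c b, (E0 c /\ L0 c) /\ x = lr c b.
Proof.
  split.
  - case=> /W_char [c [b [Ec ->]]] /LR_iff [c' [b' [Lc' E]]].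
    move: Lc'; case: (lr_inj E) => <- _ Lc. by exists c, b.
  - case=> c [b [[Ec Lc] ->]]; split; [apply/W_char | apply/LR_iff]; by exists c, b.
Qed.

Lemma capV x : capS (conjS (@compf L) alpha (AdS mul inv L0)) (AdS mul inv L0) x <->
  exists c, (E0 c /\ L0 c) /\ x = lr c (inv c).
Proof.
  split.
  - case=> /V_char [c [Ec ->]] /Ad_iff [c' [Lc' E]].
    move: Lc'; case: (lr_inj E) => <- _ Lc. by exists c.
  - case=> c [[Ec Lc] ->]; split; [apply/V_char | apply/Ad_iff]; by exists c.
Qed.

Lemma char : Comm (@compf L) (@PermS L) (LRaction mul inv L0) (fun g => alpha g * g0) <->
  Comm (@compf L) (AutL mul) (AdS mul inv L0) alpha.
Proof.
  have Ebij : PermS (fun g => alpha g * g0).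
    case: Halpha => [[ai aK iK] _]. exists (fun y => ai (y * inv g0)) => z.
    - by rewrite (gmulKV HG) aK.
    - by rewrite iK (gmulVK HG).
  rewrite /Comm.
  rewrite (fi_iff _ capW W_char) (fi_iff _ capW (@LR_iff)).
  rewrite (fi_iff _ capV V_char) (fi_iff _ capV (@Ad_iff)).
  rewrite !FIa !FIb. tauto.
Qed.
End Char.


Section Main.
Hypothesis Hndp : no_direct_product mul one inv.
Hypothesis Hout : exists g, ~ L0 g.
Variables f fi : L -> L.
Hypothesis Hf1 : forall x, fi (f x) = x.
Hypothesis Hf2 : forall y, f (fi y) = y.
Definition beta x := compf f (compf (lr one x) fi).
Definition gam a := compf f (compf (lr a one) fi).
Variables P Q : L -> L.
Hypothesis HPQ : forall x, beta x = lr (P x) (Q x).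
Hypothesis HP0 : forall x, L0 (P x).
Hypothesis HA : forall k, exists a b, L0 a /\ compf (lr one k) f = compf f (lr a b).
Hypothesis HE : fin_index mul
  (fun a => L0 a /\ exists a' b', L0 a' /\ compf (lr a one) f = compf f (lr a' b')) L0.

Lemma beta_mul x y : beta (x * y) = compf (beta y) (beta x).
Proof. apply: functional_extensionality => z. rewrite /beta /compf /lr Hf1. by gnorm HG. Qed.

Lemma PQM x y : P (x * y) = P y * P x /\ Q (x * y) = Q x * Q y.
Proof. have := beta_mul x y. rewrite !HPQ lr_comp => /lr_inj. by []. Qed.
Lemma PM x y : P (x * y) = P y * P x. Proof. by case: (PQM x y). Qed.
Lemma QM x y : Q (x * y) = Q x * Q y. Proof. by case: (PQM x y). Qed.

Lemma beta1 : beta one = id.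
Proof. apply: functional_extensionality => z. rewrite /beta /compf /lr. gnorm HG. by rewrite Hf2. Qed.
Lemma P1 : P one = one /\ Q one = one.
Proof. have := beta1. rewrite HPQ -lr11 => /lr_inj. by []. Qed.
Lemma PV x : P (inv x) = inv (P x).
Proof. apply: (ginv_uniq HG). by rewrite -PM (gVl HG); case: P1. Qed.
Lemma QV x : Q (inv x) = inv (Q x).
Proof. apply: (ginv_uniq HG). by rewrite -QM (gVr HG); case: P1. Qed.

Lemma faithful x : P x = one -> Q x = one -> x = one.
Proof.
  move=> Hp Hq. have E : beta x = id by rewrite HPQ Hp Hq lr11.
  have := f_equal (fun F => F (f one)) E. rewrite /beta /compf /lr Hf1 (g1l HG) (g1l HG) => Ef.
  by rewrite -(Hf1 x) Ef Hf1.
Qed.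

Lemma trans g : exists x, P x * f one * Q x = g.
Proof.
  exists (fi g). have := f_equal (fun F => F (f one)) (HPQ (fi g)).
  rewrite /beta /compf /lr Hf1 (g1l HG) (g1l HG) Hf2. by move=> <-.
Qed.

Lemma decomp c0 k a b : L0 a -> compf (lr c0 k) f = compf f (lr a b) ->
  (forall x, (c0 * P (inv b)) * P x = P x * (c0 * P (inv b))) /\
  (forall x, Q x * (Q (inv b) * k) = (Q (inv b) * k) * Q x).
Proof.
  move=> Ha E.
  have G1 : gam a = compf (lr c0 k) (beta (inv b)).
    apply: functional_extensionality => z.
    have := f_equal (fun F => F (one * fi z * inv b)) E. rewrite /gam /beta /compf => ->.
    rewrite /lr. by gnorm HG.
  have G2 : forall x, compf (gam a) (beta x) = compf (beta x) (gam a).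
    move=> x; apply: functional_extensionality => z. rewrite /gam /beta /compf /lr !Hf1. by gnorm HG.
  have G3 : forall x, (c0 * P (inv b)) * P x = P x * (c0 * P (inv b)) /\ Q x * (Q (inv b) * k) = (Q (inv b) * k) * Q x.
    move=> x. have := G2 x. rewrite G1 !HPQ !lr_comp. move/lr_inj. case=> E1 E2.
    by split.
  by split=> x; case: (G3 x).
Qed.

Lemma Qdec k : exists b c2, k = Q b * c2 /\ (forall x, Q x * c2 = c2 * Q x).
Proof.
  case: (HA k) => a [b [Ha E]]. case: (decomp Ha E) => _ H2.
  exists b, (Q (inv b) * k); split=> //. rewrite QV. by gnorm HG.
Qed.

Lemma ZQ z : (forall x, Q x * z = z * Q x) -> z = one.
Proof.
  pose A := fun y => exists x, y = Q x.
  pose B := fun z => forall x, Q x * z = z * Q x.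
  have SA : is_subgroup mul one (fun _ => True) A.
    apply: (mk_sub HG) => //.
    - by exists one; case: P1.
    - move=> a b [x ->] [y ->]. exists (x * y). by rewrite QM.
    - move=> a [x ->]. exists (inv x). by rewrite QV.
  have SB : is_subgroup mul one (fun _ => True) B.
    apply: (mk_sub HG) => //.
    - move=> x. by gnorm HG.
    - move=> a b Ha Hb x. by rewrite (gA HG) Ha -(gA HG) Hb (gA HG).
    - move=> a Ha x. apply: (gcanl HG (x := a)).
      by rewrite (gA HG) -Ha; gnorm HG.
  have NA : normalS mul inv A.
    move=> g h [x ->]. case: (Qdec g) => b [c [-> Hc]].
    exists (b * x * inv b). rewrite !QM QV.
    rewrite (gVM HG) -[Q b * c * Q x](gA HG) -Hc. by gnorm HG.
  have NB : normalS mul inv B.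
    move=> g h Hh. case: (Qdec g) => b [c [-> Hc]].
    have Bw : B (c * h * inv c).
      apply: (sub_mul SB); [apply: (sub_mul SB) => // | exact: (sub_inv HG SB)].
    have -> : Q b * c * h * inv (Q b * c) = c * h * inv c; last exact: Bw.
    have -> : Q b * c * h * inv (Q b * c) = Q b * (c * h * inv c) * inv (Q b) by gnorm HG.
    by rewrite (Bw b) (gmulKV HG).
  case: (Hndp SA SB NA NB).
  - move=> x [y ->] Hy. apply: center => g. case: (Qdec g) => b [c [-> Hc]].
    by rewrite (gA HG) -Hy -(gA HG) Hc (gA HG).
  - move=> g. case: (Qdec g) => b [c [-> Hc]]. exists (Q b), c; split; first by exists b.
    by split.
  - move=> HAt. exfalso. case: Hout => g0 Hg0. case: (trans (g0 * f one)) => x.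
    have -> : Q x = one by apply: HAt; exists x.
    rewrite (g1r HG) => /(gcanr HG) E. by apply: Hg0; rewrite -E.
  - by move=> HB; apply: HB.
Qed.

Lemma Gk k : exists b, Q b = k /\ P b = one.
Proof.
  case: (HA k) => a [b [Ha E]]. case: (decomp Ha E) => H1 H2.
  have Ek : Q b = k.
    have Z := ZQ H2. rewrite QV in Z. by rewrite -(gVK HG (Q b)) -(ginv_uniq HG Z).
  exists b; split=> //.
  set p := P b.
  have Hp : forall x, p * P x = P x * p.
    move=> x. apply: (gcanl HG (x := inv p)).
    have := H1 x. rewrite (g1l HG) PV -/p => H.
    rewrite (gA HG) (gVl HG) (g1l HG) (gA HG) H. by gnorm HG.
  case: (classic (p = one)) => // np; exfalso.
  apply: (Hicc np). case: HE => s1 [s1L cov].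
  exists (List.map (fun a => a * p * inv a) s1) => g Lg.
  case: (cov g Lg) => a0 [k' [Ia [[Lk' [a' [b' [La' E']]]] ->]]].
  case: (decomp La' E') => Hc _.
  set q := P b'.
  have Eq : P (inv b') = inv q by rewrite PV.
  rewrite Eq in Hc.
  have Ck : k' * p = p * k'.
    have -> : k' * p = (k' * inv q) * (q * p) by gnorm HG.
    rewrite -(Hp b') -/q (gA HG) (Hc b) -/p. by gnorm HG.
  apply/List.in_map_iff; exists a0; split=> //.
  have -> : a0 * k' * p * inv (a0 * k') = a0 * (k' * p) * inv k' * inv a0 by gnorm HG.
  rewrite Ck. by gnorm HG.
Qed.

Lemma allP x : P x = one.
Proof.
  pose N := fun x => P x = one.
  pose M := fun x => Q x = one.
  have SN : is_subgroup mul one (fun _ => True) N.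
    apply: (mk_sub HG) => //.
    - by case: P1.
    - move=> a b Ha Hb. by rewrite /N PM Ha Hb (g1l HG).
    - move=> a Ha. by rewrite /N PV Ha (gV1 HG).
  have SM : is_subgroup mul one (fun _ => True) M.
    apply: (mk_sub HG) => //.
    - by case: P1.
    - move=> a b Ha Hb. by rewrite /M QM Ha Hb (g1l HG).
    - move=> a Ha. by rewrite /M QV Ha (gV1 HG).
  have NN : normalS mul inv N.
    move=> g h Hh. by rewrite /N !PM Hh PV (g1l HG) (gVl HG).
  have NM : normalS mul inv M.
    move=> g h Hh. by rewrite /M !QM Hh QV (g1r HG) (gVr HG).
  case: (Hndp SN SM NN NM).
  - move=> y Hy1 Hy2. exact: faithful.
  - move=> g. case: (Gk (Q g)) => b [Eb Pb]. exists b, (inv b * g); split=> //; split.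
    + by rewrite /M QM QV Eb (gVl HG).
    + by gnorm HG.
  - move=> HN. exfalso. case: Hout => g0 Hg0. case: (Gk g0) => b [Eb Pb].
    have b1 := HN b Pb. rewrite b1 in Eb. case: P1 => _ Q1. rewrite Q1 in Eb.
    apply: Hg0. rewrite -Eb. exact: (sub_one Hsub).
  - move=> HM. case: (Gk (Q x)) => b [Eb Pb].
    have : x * inv b = one by apply: HM; rewrite /M QM QV Eb (gVr HG).
    move=> H. have -> : x = b by rewrite -(gmulVK HG x b) H (g1l HG).
    exact: Pb.
Qed.

Lemma fQ y x : f (y * x) = f y * Q x.
Proof.
  have := f_equal (fun F => F (f y)) (HPQ x). rewrite allP /beta /compf /lr Hf1 !(g1l HG). by [].
Qed.

Lemma final : exists alpha, AutL mul alpha /\ f = (fun g => alpha g * f one).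
Proof.
  exists (fun g => f g * inv (f one)); split.
  - split.
    + exists (fun y => fi (y * f one)) => z; first by rewrite (gmulVK HG) Hf1.
      by rewrite Hf2 (gmulKV HG).
    + move=> x y. have Ey : f y = f one * Q y by rewrite -fQ (g1l HG).
      rewrite fQ Ey. by gnorm HG.
  - apply: functional_extensionality => z. by rewrite (gmulVK HG).
Qed.
End Main.
End P2.

Theorem part2 :
  (forall (L : Type) (mul : L -> L -> L) (one : L) (inv : L -> L)
          (L0 : L -> Prop),
     is_group mul one inv ->
     no_direct_product mul one inv ->
     no_fin_index_sub mul one ->
     is_subgroup mul one (fun _ => True) L0 ->
     (exists g, ~ L0 g) ->
     relative_ICC mul one inv L0 ->
     forall f : L -> L,
       Comm (@compf _) (@PermS _) (LRaction mul inv L0) f <->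
       exists (alpha : L -> L) (g0 : L),
         Comm (@compf _) (AutL mul) (AdS mul inv L0) alpha /\
         f = (fun g => mul (alpha g) g0)).
Proof.
  move=> L mul one inv L0 HG Hndp NF Hsub Hout Hicc f; split; last first.
  { case=> alpha [g0 [Hc ->]]. have Hal : AutL mul alpha by case: Hc.
    by apply/(char HG Hicc Hal). }
  move=> HC. have HC0 := HC. case: HC0 => Hbij [FI1 FI2].
  case: (Hbij) => fi Hf1 Hf2.
  have FLR := LR_fgrp HG Hsub.
  have FW := conj_fgrp FLR Hbij.
  have FK := cap_fgrp FW FLR.
  have KW : forall x, capS (conjS (@compf L) f (LRaction mul inv L0)) (LRaction mul inv L0) x ->
                      conjS (@compf L) f (LRaction mul inv L0) x by move=> x [].
  have KL : forall x, capS (conjS (@compf L) f (LRaction mul inv L0)) (LRaction mul inv L0) x ->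
                      LRaction mul inv L0 x by move=> x [].
  have HA : forall k, exists a b, L0 a /\ compf (lr mul one k) f = compf f (lr mul a b).
    have phiM : forall a b, lr mul one (inv (mul a b)) = compf (lr mul one (inv a)) (lr mul one (inv b)).
      move=> a b. by rewrite (lr_comp HG) (gVM HG) (g1l HG).
    have phi1 : lr mul one (inv one) = id by rewrite (gV1 HG) (lr11 HG).
    have H := all_K HG phiM phi1 NF FLR FK KL FI2
      (fun d => proj2 (LR_iff L0 HG _) (ex_intro _ one (ex_intro _ (inv d) (conj (sub_one Hsub) erefl)))).
    move=> k. have := H (inv k). rewrite (gVK HG). case=> [[h [/(LR_iff L0 HG) [a [b [La ->]]] E]] _].
    by exists a, b.
  have HB : forall x, exists pq : L * L, L0 pq.1 /\ beta mul one f fi x = lr mul pq.1 pq.2.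
    pose phi := fun x => compf f (compf (lr mul one (inv x)) fi).
    have phiM : forall a b, phi (mul a b) = compf (phi a) (phi b).
      move=> a b. apply: functional_extensionality => z. rewrite /phi /compf /lr Hf1. by gnorm HG.
    have phi1 : phi one = id.
      apply: functional_extensionality => z. rewrite /phi /compf /lr. gnorm HG. by rewrite Hf2.
    have PG : forall d, conjS (@compf L) f (LRaction mul inv L0) (phi d).
      move=> d. exists (lr mul one (inv d)); split.
      - apply/(LR_iff L0 HG); exists one, (inv d); split=> //; exact: (sub_one Hsub).
      - apply: functional_extensionality => z. by rewrite /phi /compf Hf1.
    have H := all_K HG phiM phi1 NF FW FK KW FI1 PG.
    move=> x. have := H (inv x). case=> _ /(LR_iff L0 HG) [p [q [Lp E]]].
    exists (p, q); split=> //. rewrite -E /phi (gVK HG). by [].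
  pose PQ := fun x => proj1_sig (constructive_indefinite_description _ (HB x)).
  have HPQ : forall x, L0 (PQ x).1 /\ beta mul one f fi x = lr mul (PQ x).1 (PQ x).2.
    move=> x. exact: (proj2_sig (constructive_indefinite_description _ (HB x))).
  have HE : fin_index mul
     (fun a => L0 a /\ exists a' b', L0 a' /\ compf (lr mul a one) f = compf f (lr mul a' b')) L0.
    have phiM : forall a b, lr mul (mul a b) one = compf (lr mul a one) (lr mul b one).
      move=> a b. by rewrite (lr_comp HG) (g1l HG).
    have phi1 : lr mul one one = id by rewrite (lr11 HG).
    have PG : forall d, L0 d -> LRaction mul inv L0 (lr mul d one).
      move=> d Ld. apply/(LR_iff L0 HG). by exists d, one.
    have H := hom_fi HG phiM phi1 FLR FK KL FI2 Hsub PG.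
    apply: fi_mono H => d [Ld [[h [/(LR_iff L0 HG) [a [b [La ->]]] E]] _]].
    split=> //. by exists a, b.
  case: (final HG Hsub Hicc Hndp Hout Hf1 Hf2 (fun x => proj2 (HPQ x)) (fun x => proj1 (HPQ x)) HA HE)
    => alpha [Hal Ef].
  exists alpha, (f one); split=> //.
  apply/(char HG Hicc Hal (f one)). move: HC. by rewrite {1}Ef.
Qed.

Lemma In_mem (T : eqType) (a : T) (s : seq T) : List.In a s -> a \in s.
Proof. elim: s => [//|b s IH] /= [->|/IH H]; rewrite in_cons ?eqxx ?H ?orbT //. Qed.

Lemma div_all n (H : 'cV[rat]_n -> Prop) :
  H 0 -> (forall a b, H a -> H b -> H (a + b)) -> (forall a, H a -> H (- a)) ->
  fin_index +%R H (fun _ => True) -> forall x, H x.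
Proof.
  move=> H0 HD HN [s [_ cov]] x.
  have Hnat : forall (k : nat) z, H z -> H (k%:R *: z).
    move=> k z Hz; elim: k => [|k IH]; first by rewrite scale0r.
    by rewrite [k.+1%:R]mulrSr scalerDl scale1r; apply: HD.
  set m := size s.
  set y := (m`!%:R : rat)^-1 *: x.
  have F : forall j : 'I_m.+1, exists i : 'I_m, H (j%:R *: y - nth 0 s i).
    move=> j. case: (cov (j%:R *: y) I) => a [k [Ia [Hk E]]].
    have Ma := In_mem Ia.
    exists (Ordinal (etrans (index_mem a s) Ma)) => /=.
    by rewrite nth_index // E addrC addKr.
  pose F' := fun j => proj1_sig (constructive_indefinite_description _ (F j)).
  have HF' : forall j : 'I_m.+1, H (j%:R *: y - nth 0 s (F' j)).
    move=> j; exact: (proj2_sig (constructive_indefinite_description _ (F j))).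
  have NI : ~ injective F'.
    move=> /leq_card; rewrite !card_ord. by rewrite ltnn.
  have [j1 [j2 [E12 N12]]] : exists j1 j2, F' j1 = F' j2 /\ j1 <> j2.
    apply: NNPP => C; apply: NI => j1 j2 E. apply: NNPP => N; apply: C. by exists j1, j2.
  have Hd : forall a b : 'I_m.+1, F' a = F' b -> (b < a)%N -> H ((a - b)%N%:R *: y).
    move=> a b Eab lt. have := HD _ _ (HF' a) (HN _ (HF' b)).
    rewrite Eab natrB ?(ltnW lt) // scalerBl.
    by rewrite opprB addrA subrK.
  have [d [d0 [dm Hdy]]] : exists d, (0 < d)%N /\ (d <= m)%N /\ H (d%:R *: y).
    case: (ltngtP j1 j2) => [lt|lt|eq]; last by exfalso; apply: N12; apply: val_inj.
    - exists (j2 - j1)%N; split; first by rewrite subn_gt0.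
      split; last exact: Hd.
      have := ltn_ord j2. rewrite ltnS => Hj. exact: leq_trans (leq_subr _ _) Hj.
    - exists (j1 - j2)%N; split; first by rewrite subn_gt0.
      split; last exact: Hd.
      have := ltn_ord j1. rewrite ltnS => Hj. exact: leq_trans (leq_subr _ _) Hj.
  have Dv : (d %| m`!)%N by apply: dvdn_fact; rewrite d0 dm.
  have -> : x = (m`! %/ d)%N%:R *: (d%:R *: y).
    rewrite scalerA -natrM divnK // /y scalerA mulfV ?scale1r //.
    by rewrite pnatr_eq0 -lt0n fact_gt0.
  exact: Hnat.
Qed.

Section P1.
Variable n : nat.
Local Notation X := 'cV[rat]_n.
Definition aff (A : 'M[rat]_n) (u : X) : X -> X := fun w => u + A *m w.

Lemma aff_comp A u B u' : compf (aff A u) (aff B u') = aff (A *m B) (u + A *m u').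
Proof. apply: functional_extensionality => w. by rewrite /compf /aff mulmxDr mulmxA addrA. Qed.

Lemma mx_ext (A B : 'M[rat]_n) : (forall w : X, A *m w = B *m w) -> A = B.
Proof.
  move=> H; apply/matrixP => i j. have := H (delta_mx j 0). rewrite -!colE => /col_eq E. exact: E i.
Qed.

Lemma aff_inj A u B u' : aff A u = aff B u' -> A = B /\ u = u'.
Proof.
  move=> E. have E1 : forall w, u + A *m w = u' + B *m w by move=> w; exact: (f_equal (fun F => F w) E).
  have Eu : u = u' by have := E1 0; rewrite !mulmx0 !addr0.
  split=> //. apply: mx_ext => w. have := E1 w. rewrite Eu. exact: addrI.
Qed.

Lemma aff_id : aff 1%:M 0 = id.
Proof. apply: functional_extensionality => w. by rewrite /aff mul1mx add0r. Qed.

Variable Gamma : 'M[rat]_n -> Prop.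
Hypothesis HGa : is_subgroup (@matmul n) 1%:M (@GLn n) Gamma.

Lemma Aff_iff x : Aff Gamma x <-> exists g c, Gamma g /\ x = aff g c.
Proof. by []. Qed.

Lemma Ga_unit g : Gamma g -> g \in unitmx.
Proof. by case: HGa => S _ /S. Qed.
Lemma Ga_one : Gamma 1%:M. Proof. by case: HGa => _ []. Qed.
Lemma Ga_mul a b : Gamma a -> Gamma b -> Gamma (a *m b).
Proof. by case: HGa => _ [] _ [] M _; apply: M. Qed.
Lemma Ga_inv a : Gamma a -> Gamma (invmx a).
Proof.
  case: HGa => S [] _ [] _ I Ha. case: (I a Ha) => b [Hb [E _]].
  have -> : invmx a = b; last by [].
  rewrite /matmul in E. by rewrite -[b](mulKmx (S a Ha)) E mulmx1.
Qed.

Lemma Aff_fgrp : fgrp (Aff Gamma).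
Proof.
  split; [|split].
  - apply/Aff_iff; exists 1%:M, 0; split; [exact: Ga_one | by rewrite aff_id].
  - move=> x y /Aff_iff [g [c [Hg ->]]] /Aff_iff [g' [c' [Hg' ->]]].
    apply/Aff_iff; exists (g *m g'), (c + g *m c'); split; [exact: Ga_mul | exact: aff_comp].
  - move=> x /Aff_iff [g [c [Hg ->]]]. exists (aff (invmx g) (- (invmx g *m c))); split.
    + apply/Aff_iff; exists (invmx g), (- (invmx g *m c)); split; [exact: Ga_inv Hg | by []].
    + have U := Ga_unit Hg.
      split; rewrite aff_comp.
      * by rewrite mulmxV // mulmxN mulKVmx // subrr aff_id.
      * by rewrite mulVmx // addNr aff_id.
Qed.

Section Char1.
Variable M : 'M[rat]_n.
Hypothesis HM : M \in unitmx.
Variable v : X.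

Lemma W_char1 x : conjS (@compf X) (aff M v) (Aff Gamma) x <->
  exists A u, conjS (@matmul n) M Gamma A /\ x = aff A u.
Proof.
  split.
  - case=> h [/Aff_iff [g [c [Hg ->]]] E].
    exists (M *m g *m invmx M), (v + M *m c - M *m g *m invmx M *m v); split.
    + exists g; split=> //. by rewrite /matmul mulmxKV.
    + apply: functional_extensionality => y.
      have Ey : aff M v (invmx M *m (y - v)) = y by rewrite /aff mulKVmx // addrC subrK.
      have := f_equal (fun F => F (invmx M *m (y - v))) E. rewrite /compf Ey => ->.
      rewrite /aff !mulmxDr !mulmxA ?mulmxN !addrA.
      by rewrite [RHS]addrAC.
  - case=> A [u [[h [Hh EA]] ->]].
    exists (aff h (invmx M *m (u + A *m v - v))); split; first by apply/Aff_iff; exists h, (invmx M *m (u + A *m v - v)).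
    apply: functional_extensionality => w. rewrite /compf /aff [in LHS]mulmxDr [in RHS]mulmxDr mulKVmx //.
    rewrite /matmul in EA. rewrite !mulmxA EA.
    by rewrite [in RHS]addrA [v + _]addrC subrK addrA.
Qed.

Lemma capW1 x : capS (conjS (@compf X) (aff M v) (Aff Gamma)) (Aff Gamma) x <->
  exists A u, (conjS (@matmul n) M Gamma A /\ Gamma A) /\ x = aff A u.
Proof.
  split.
  - case=> /W_char1 [A [u [HA ->]]] /Aff_iff [g [c [Hg E]]].
    move: Hg; case: (aff_inj E) => <- _ Hg. by exists A, u.
  - case=> A [u [[HA HA'] ->]]; split; [apply/W_char1 | apply/Aff_iff]; by exists A, u.
Qed.

Lemma conj_unit A : conjS (@matmul n) M Gamma A -> A \in unitmx.
Proof.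
  case=> h [Hh E]. rewrite /matmul in E.
  have -> : A = M *m h *m invmx M by rewrite -E mulmxK.
  by rewrite !unitmx_mul unitmx_inv HM (Ga_unit Hh).
Qed.
End Char1.

Lemma FI_aff (Xp Yp : 'M[rat]_n -> Prop) : (forall A, Xp A -> A \in unitmx) ->
  (fin_index (@compf X) (fun x => exists A u, Yp A /\ x = aff A u) (fun x => exists A u, Xp A /\ x = aff A u)
  <-> fin_index (@matmul n) Yp Xp).
Proof.
  move=> XU; split.
  - case=> s [sX cov].
    case: (list_pick Xp (fun a C => exists u, a = aff C u) s) => s' [s'X s'P].
    exists s'; split=> // A XA.
    case: (cov (aff A 0)); first by exists A, 0.
    move=> a [k [Ia [[D [u1 [YD ->]]] E]]].
    case: (sX a Ia) => C [u0 [XC Ea]].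
    case: (s'P a Ia C XC); first by exists u0.
    move=> C' [IC' [u2 Ea']].
    exists C', D; split=> //; split=> //.
    rewrite Ea' aff_comp in E. by case: (aff_inj E).
  - case=> s [sX cov]. exists (List.map (fun C => aff C 0) s); split.
    + move=> a /List.in_map_iff [C [<- IC]]. exists C, 0; split=> //; exact: sX.
    + move=> h [A [u [XA ->]]]. case: (cov A XA) => C [D [IC [YD ->]]].
      exists (aff C 0), (aff D (invmx C *m u)); split; first by apply/List.in_map_iff; exists C.
      split; first by exists D, (invmx C *m u).
      have UC : C \in unitmx by apply: XU; exact: sX.
      by rewrite aff_comp add0r mulKVmx.
Qed.

Lemma char1 M v : M \in unitmx ->
  (Comm (@compf X) (@PermS X) (Aff Gamma) (aff M v) <-> Comm (@matmul n) (@GLn n) Gamma M).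
Proof.
  move=> HM.
  have Ebij : PermS (aff M v).
    exists (aff (invmx M) (- (invmx M *m v))) => z; rewrite /aff.
    - by rewrite mulmxDr mulKmx // addrA addNr add0r.
    - by rewrite mulmxDr mulKVmx // mulmxN mulKVmx // addrA subrr add0r.
  rewrite /Comm.
  rewrite (fi_iff _ (capW1 HM v) (W_char1 HM v)) (fi_iff _ (capW1 HM v) (@Aff_iff)).
  have H1 := FI_aff (capS (conjS (@matmul n) M Gamma) Gamma) (@conj_unit M HM).
  have H2 := FI_aff (capS (conjS (@matmul n) M Gamma) Gamma) Ga_unit.
  rewrite /capS in H1 H2 *. rewrite H1 H2. rewrite /GLn. tauto.
Qed.
End P1.

Section Main1.
Variable n : nat.
Local Notation X := 'cV[rat]_n.
Variable Gamma : 'M[rat]_n -> Prop.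
Hypothesis HGa : is_subgroup (@matmul n) 1%:M (@GLn n) Gamma.
Variables f fi : X -> X.
Hypothesis Hf1 : forall x, fi (f x) = x.
Hypothesis Hf2 : forall y, f (fi y) = y.
Definition tr (u : X) := aff 1%:M u.
Definition bet (u : X) := compf f (compf (tr u) fi).
Hypothesis HT : forall x, exists g c, Gamma g /\ compf (tr x) f = compf f (aff g c).
Variables (Gm : X -> 'M[rat]_n) (cm : X -> X).
Hypothesis HB : forall u, bet u = aff (Gm u) (cm u).
Variable Gamma0 : 'M[rat]_n -> Prop.
Hypothesis H0K : forall d, Gamma0 d -> exists g c, Gamma g /\ compf (aff d 0) f = compf f (aff g c).
Hypothesis Hirr : forall V : X -> Prop, is_subspace V ->
  (forall g v, Gamma0 g -> V v -> V (g *m v)) -> (exists v, V v /\ v <> 0) -> forall v, V v.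

Lemma bet_add u u' : bet (u + u') = compf (bet u) (bet u').
Proof. apply: functional_extensionality => y. by rewrite /bet /compf /tr /aff Hf1 !mul1mx addrA. Qed.

Lemma GC u u' : Gm (u + u') = Gm u *m Gm u' /\ cm (u + u') = cm u + Gm u *m cm u'.
Proof. have := bet_add u u'. rewrite !HB aff_comp. by move/aff_inj. Qed.

Lemma bet0 : bet 0 = aff 1%:M 0.
Proof. apply: functional_extensionality => y. by rewrite /bet /compf /tr /aff !mul1mx !add0r Hf2. Qed.
Lemma GC0 : Gm 0 = 1%:M /\ cm 0 = 0.
Proof. have := bet0. rewrite HB. by move/aff_inj. Qed.

Lemma conjrel d dd g e : compf (aff d dd) f = compf f (aff g e) -> forall u,
  d *m Gm u = Gm (g *m u) *m d /\ dd + d *m cm u = cm (g *m u) + Gm (g *m u) *m dd.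
Proof.
  move=> E u.
  have E2 : compf (aff d dd) (bet u) = compf (bet (g *m u)) (aff d dd).
    apply: functional_extensionality => y.
    have Ey : aff d dd y = f (aff g e (fi y)).
      by rewrite -{1}(Hf2 y); have := f_equal (fun F => F (fi y)) E; rewrite /compf.
    rewrite /bet /compf Ey Hf1.
    have := f_equal (fun F => F (tr u (fi y))) E; rewrite /compf => ->.
    rewrite /tr /aff !mul1mx mulmxDr. congr f.
    by rewrite addrCA.
  move: E2. rewrite !HB !aff_comp. by move/aff_inj.
Qed.

Lemma TR u x : exists z, bet z = tr (x - Gm u *m x).
Proof.
  case: (HT x) => g [c [Hg E]].
  have [R1 R2] := conjrel E u. rewrite mul1mx mulmx1 in R1.
  case: (GC u (- u)) => G1 C1. rewrite subrr in G1 C1. case: GC0 => G0 C0.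
  rewrite G0 in G1; rewrite C0 in C1.
  exists (g *m u - u). rewrite HB. case: (GC (g *m u) (- u)) => -> ->.
  rewrite -R1 -G1 /tr. congr aff.
  have -> : Gm u *m cm (- u) = - cm u by apply/eqP; rewrite -addr_eq0 addrC -C1.
  rewrite mul1mx -R1 in R2.
  have Egu : cm (g *m u) = x + cm u - Gm u *m x by rewrite R2 addrK.
  by rewrite Egu addrAC addrK.
Qed.

Lemma Fix z y : bet z = tr y -> forall u, Gm u *m y = y.
Proof.
  move=> Ez u. have E : bet (u + z) = bet (z + u) by rewrite addrC.
  rewrite !bet_add Ez HB /tr !aff_comp mul1mx in E.
  case: (aff_inj E) => _. rewrite mul1mx addrC. by move/addIr.
Qed.

Lemma allG u : Gm u = 1%:M.
Proof.
  case: (classic (Gm u = 1%:M)) => // Hne.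
  have [x Hx] : exists x : X, x - Gm u *m x <> 0.
    case: (classic (exists x : X, x - Gm u *m x <> 0)) => // C. exfalso.
    apply: Hne; apply: mx_ext => w. rewrite mul1mx.
    apply/eqP; rewrite eq_sym -subr_eq0; apply/eqP.
    case: (classic (w - Gm u *m w = 0)) => // N. exfalso; apply: C; by exists w.
  pose S := fun y : X => forall u, Gm u *m y = y.
  have SS : is_subspace S.
    split; [|split].
    - by move=> u'; rewrite mulmx0.
    - by move=> a b Ha Hb u'; rewrite mulmxDr Ha Hb.
    - by move=> c a Ha u'; rewrite -scalemxAr Ha.
  have Inv : forall g v, Gamma0 g -> S v -> S (g *m v).
    move=> d y Hd Hy u'. case: (H0K Hd) => g [e [Hg E]].
    have Ug := Ga_unit HGa Hg.
    have [R1 _] := conjrel E (invmx g *m u').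
    rewrite mulKVmx // in R1. by rewrite mulmxA -R1 -mulmxA Hy.
  have NZ : exists v, S v /\ v <> 0.
    exists (x - Gm u *m x); split=> //. case: (TR u x) => z Ez. exact: Fix Ez.
  have All := Hirr SS Inv NZ.
  apply: mx_ext => w. by rewrite mul1mx (All w u).
Qed.

Lemma cmD u u' : cm (u + u') = cm u + cm u'.
Proof. case: (GC u u') => _ ->. by rewrite allG mul1mx. Qed.
Lemma cm0 : cm 0 = 0. Proof. by case: GC0. Qed.
Lemma cmN u : cm (- u) = - cm u.
Proof. apply/eqP; rewrite -addr_eq0 -cmD addNr. by rewrite cm0. Qed.

Lemma fC u w : f (u + w) = cm u + f w.
Proof.
  have := f_equal (fun F => F (f w)) (HB u). rewrite allG /bet /compf /tr /aff Hf1 !mul1mx. by [].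
Qed.

Lemma cm_nat (k : nat) u : cm (k%:R *: u) = k%:R *: cm u.
Proof.
  elim: k => [|k IH]; first by rewrite !scale0r cm0.
  by rewrite [k.+1%:R]mulrSr !scalerDl !scale1r cmD IH.
Qed.
Lemma cm_int (z : int) u : cm (z%:~R *: u) = z%:~R *: cm u.
Proof.
  case: z => k; first exact: cm_nat.
  by rewrite NegzE mulrNz !scaleNr cmN cm_nat.
Qed.
Lemma cm_scale (q : rat) u : cm (q *: u) = q *: cm u.
Proof.
  set d : rat := (denq q)%:~R.
  have dn : d != 0 by rewrite /d intr_eq0 denq_neq0.
  have E1 : cm (d^-1 *: u) = d^-1 *: cm u.
    have : cm u = d *: cm (d^-1 *: u) by rewrite -cm_int scalerA mulfV // scale1r.
    move=> ->. by rewrite scalerA mulVf // scale1r.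
  rewrite -{1 2}(divq_num_den q) -/d -!scalerA cm_int E1. by [].
Qed.

Definition Mc : 'M[rat]_n := \matrix_(i, j) (cm (delta_mx j 0)) i 0.

Lemma cm_mx w : cm w = Mc *m w.
Proof.
  rewrite [in cm w](matrix_sum_delta w) [in Mc *m w](matrix_sum_delta w).
  rewrite (big_morph cm cmD cm0) mulmx_sumr. apply: eq_bigr => i _.
  rewrite (big_morph cm cmD cm0) mulmx_sumr. apply: eq_bigr => j _.
  rewrite cm_scale -scalemxAr. congr (_ *: _).
  rewrite (ord1 j) -colE. apply/matrixP => a b. by rewrite !mxE (ord1 b).
Qed.

Lemma Mc_unit : Mc \in unitmx.
Proof.
  have Inj : forall w : X, Mc *m w = 0 -> w = 0.
    move=> w Hw. have Hc : cm w = 0 by rewrite cm_mx. have := fC w 0. rewrite Hc add0r addr0 => E.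
    by rewrite -(Hf1 w) E Hf1.
  rewrite -unitmx_tr -row_free_unit -kermx_eq0. apply/eqP/row_matrixP => i.
  have K := mulmx_ker Mc^T.
  have : row i (kermx Mc^T) *m Mc^T = 0 by rewrite -row_mul K row0.
  move=> /(f_equal trmx). rewrite trmx_mul trmxK trmx0 => /Inj E.
  by rewrite row0 -[row i _]trmxK E trmx0.
Qed.

Lemma f_aff : f = aff Mc (f 0).
Proof. apply: functional_extensionality => w. by rewrite /aff -cm_mx addrC -fC addr0. Qed.
End Main1.

Section Asm.
Variable n : nat.
Local Notation X := 'cV[rat]_n.
Variable Gamma : 'M[rat]_n -> Prop.
Hypothesis HGa : is_subgroup (@matmul n) 1%:M (@GLn n) Gamma.
Variable K : (X -> X) -> Prop.
Hypothesis FK : fgrp K.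
Hypothesis KG : forall x, K x -> Aff Gamma x.

Lemma addgrp : is_group (+%R : X -> X -> X) 0 (-%R : X -> X).
Proof. split; [exact: addrA | split; [exact: add0r | exact: addNr]]. Qed.

Lemma aff_mul0 (a b : 'M[rat]_n) : aff (a *m b) 0 = compf (aff a 0) (aff b 0).
Proof. by rewrite aff_comp mulmx0 addr0. Qed.

Lemma mx_sub : is_subgroup (@matmul n) 1%:M Gamma (fun d => Gamma d /\ K (aff d 0)).
Proof.
  split; first by move=> d [].
  split; first by split; [exact: Ga_one HGa | rewrite aff_id; exact: fgrp_id].
  split.
  - move=> a b [Ga Ka] [Gb Kb]; split; first exact: (Ga_mul HGa).
    rewrite /matmul aff_mul0; exact: fgrp_comp.
  - move=> a [Ga Ka]. have U := Ga_unit HGa Ga.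
    exists (invmx a); split; last by rewrite /matmul mulmxV // mulVmx.
    split; first exact: (Ga_inv HGa).
    apply: (fgrp_inv FK Ka); by rewrite -aff_mul0 ?mulVmx ?mulmxV // aff_id.
Qed.

Lemma mx_fi : fin_index (@compf X) K (Aff Gamma) ->
  fin_index (@matmul n) (fun d => Gamma d /\ K (aff d 0)) Gamma.
Proof.
  move=> [s [sG cov]].
  case: (list_pick Gamma (fun a r => exists k, K k /\ aff r 0 = compf a k) s) => s' [s'D s'P].
  exists s'; split=> // d Dd.
  case: (cov (aff d 0)); first by apply/Aff_iff; exists d, 0.
  move=> a [k [Ia [Kk E]]].
  case: (s'P a Ia d Dd); first by exists k.
  move=> r [Ir [k' [Kk' Er]]].
  have Ur := Ga_unit HGa (s'D r Ir).
  exists r, (invmx r *m d); split=> //; split; last by rewrite /matmul mulKVmx.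
  split; first by apply: (Ga_mul HGa); [apply: (Ga_inv HGa); exact: s'D | exact: Dd].
  case: (Aff_fgrp HGa) => _ [] _ IG. case: (IG a (sG a Ia)) => a' [_ [Ea1 Ea2]].
  case: FK => K1 [] KC IK. case: (IK k' Kk') => k2 [Kk2 [Ek1 Ek2]].
  have Einv : aff (invmx r) 0 = compf k2 a'.
    apply: (finv_uniq (x := aff r 0)); first by rewrite -aff_mul0 mulVmx // aff_id.
    rewrite Er -compfA (compfA k' k2) Ek1 comp1f. exact: Ea1.
  rewrite aff_mul0 Einv E -compfA (compfA a' a) Ea2 comp1f. exact: KC.
Qed.
End Asm.

Theorem part1 :
  (forall (n : nat) (Gamma : 'M[rat]_n -> Prop),
     is_subgroup (@matmul n) 1%:M (@GLn n) Gamma ->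
     (forall Gamma0 : 'M[rat]_n -> Prop,
        is_subgroup (@matmul n) 1%:M Gamma Gamma0 ->
        fin_index (@matmul n) Gamma0 Gamma ->
        forall V : 'cV[rat]_n -> Prop, is_subspace V ->
          (forall g v, Gamma0 g -> V v -> V (g *m v)) ->
          (exists v, V v /\ v <> 0) ->
          forall v, V v) ->
     forall f : 'cV[rat]_n -> 'cV[rat]_n,
       Comm (@compf _) (@PermS _) (Aff Gamma) f <->
       Aff (Comm (@matmul n) (@GLn n) Gamma) f).
Proof.
  move=> n Gamma HGa Hirr0 f; split; last first.
  { case=> g [v [Hc ->]]. have U : g \in unitmx by case: Hc.
    exact/(char1 HGa v U). }
  move=> HC. have HC0 := HC. case: HC0 => Hbij [FI1 FI2].
  case: (Hbij) => fi Hf1 Hf2.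
  have FA := Aff_fgrp HGa.
  have FW := conj_fgrp FA Hbij.
  have FK := cap_fgrp FW FA.
  set W := conjS (@compf _) f (Aff Gamma). set K := capS W (Aff Gamma).
  have KW : forall x, K x -> W x by move=> x [].
  have KA : forall x, K x -> Aff Gamma x by move=> x [].
  have HGadd := addgrp n.
  have trM : forall a b : 'cV[rat]_n, tr (a + b) = compf (tr a) (tr b).
    move=> a b. by rewrite /tr aff_comp mul1mx mul1mx.
  have tr0 : tr (0 : 'cV[rat]_n) = id by rewrite /tr aff_id.
  have ST : is_subgroup +%R 0 (fun _ => True) (fun _ : 'cV[rat]_n => True) by apply: (mk_sub HGadd).
  have HT : forall x, exists g c, Gamma g /\ compf (tr x) f = compf f (aff g c).
    have PG : forall d, True -> Aff Gamma (tr d).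
      move=> d _. apply/Aff_iff; exists 1%:M, d; split=> //; exact: Ga_one HGa.
    have FI := hom_fi HGadd trM tr0 FA FK KA FI2 ST PG.
    have SH := hom_sub HGadd trM tr0 FK ST.
    have All := div_all (sub_one SH) (fun a b => sub_mul SH) (fun a => sub_inv HGadd SH) FI.
    move=> x. case: (All x) => _ [[h [/Aff_iff [g [c [Hg ->]]] E]] _]. by exists g, c.
  have HB : forall u, exists gc : 'M[rat]_n * 'cV[rat]_n, bet f fi u = aff gc.1 gc.2.
    pose phi := fun u => compf f (compf (tr u) fi).
    have phiM : forall a b : 'cV[rat]_n, phi (a + b) = compf (phi a) (phi b).
      move=> a b. apply: functional_extensionality => z. by rewrite /phi trM /compf Hf1.
    have phi1 : phi 0 = id.
      apply: functional_extensionality => z. by rewrite /phi tr0 /compf Hf2.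
    have PG : forall d, True -> W (phi d).
      move=> d _. exists (tr d); split.
      - apply/Aff_iff; exists 1%:M, d; split=> //; exact: Ga_one HGa.
      - apply: functional_extensionality => z. by rewrite /phi /compf Hf1.
    have FI := hom_fi HGadd phiM phi1 FW FK KW FI1 ST PG.
    have SH := hom_sub HGadd phiM phi1 FK ST.
    have All := div_all (sub_one SH) (fun a b => sub_mul SH) (fun a => sub_inv HGadd SH) FI.
    move=> u. case: (All u) => _ [_ /Aff_iff [g [c [_ E]]]]. by exists (g, c).
  pose GC := fun u => proj1_sig (constructive_indefinite_description _ (HB u)).
  have HGC : forall u, bet f fi u = aff (GC u).1 (GC u).2.
    move=> u. exact: (proj2_sig (constructive_indefinite_description _ (HB u))).
  pose G0 := fun d => Gamma d /\ K (aff d 0).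
  have S0 : is_subgroup (@matmul n) 1%:M Gamma G0 := mx_sub HGa FK.
  have F0 : fin_index (@matmul n) G0 Gamma := mx_fi HGa FK FI2.
  have H0K : forall d, G0 d -> exists g c, Gamma g /\ compf (aff d 0) f = compf f (aff g c).
    move=> d [_ [[h [/Aff_iff [g [c [Hg ->]]] E]] _]]. by exists g, c.
  have Hirr := Hirr0 G0 S0 F0.
  have Ef := f_aff HGa Hf1 Hf2 HT HGC H0K Hirr.
  have U := Mc_unit HGa Hf1 Hf2 HT HGC H0K Hirr.
  exists (Mc (fun u => (GC u).2)), (f 0); split; last by rewrite {1}Ef.
  apply/(char1 HGa (f 0) U). move: HC. by rewrite {1}Ef.
Qed.


Theorem lemma7p1 :
  (forall (n : nat) (Gamma : 'M[rat]_n -> Prop),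
     is_subgroup (@matmul n) 1%:M (@GLn n) Gamma ->
     (forall Gamma0 : 'M[rat]_n -> Prop,
        is_subgroup (@matmul n) 1%:M Gamma Gamma0 ->
        fin_index (@matmul n) Gamma0 Gamma ->
        forall V : 'cV[rat]_n -> Prop, is_subspace V ->
          (forall g v, Gamma0 g -> V v -> V (g *m v)) ->
          (exists v, V v /\ v <> 0) ->
          forall v, V v) ->
     forall f : 'cV[rat]_n -> 'cV[rat]_n,
       Comm (@compf _) (@PermS _) (Aff Gamma) f <->
       Aff (Comm (@matmul n) (@GLn n) Gamma) f)
  /\
  (forall (L : Type) (mul : L -> L -> L) (one : L) (inv : L -> L)
          (L0 : L -> Prop),
     is_group mul one inv ->
     no_direct_product mul one inv ->
     no_fin_index_sub mul one ->
     is_subgroup mul one (fun _ => True) L0 ->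
     (exists g, ~ L0 g) ->
     relative_ICC mul one inv L0 ->
     forall f : L -> L,
       Comm (@compf _) (@PermS _) (LRaction mul inv L0) f <->
       exists (alpha : L -> L) (g0 : L),
         Comm (@compf _) (AutL mul) (AdS mul inv L0) alpha /\
         f = (fun g => mul (alpha g) g0)).
Proof.
  split; [exact: part1 | exact: part2].
Qed.
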